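(* Let $p>1$, fix a choice of sign $\pm$, and let $f\in C_0^2(\mathbb{R})$, $g\in C_0^1(\mathbb{R})$ satisfy $\pm f'(x_0)+g(x_0)\neq0$ for some $x_0\in\mathbb{R}$ (same sign as in the equation below). Consider \[ \begin{cases} u_{tt}-u_{xx}=|u_t\pm u_x|^{p-1}(u_t\pm u_x) & \text{in } \mathbb{R}\times(0,T),\\ u(x,0)=\varepsilon f(x),\quad u_t(x,0)=\varepsilon g(x), & x\in\mathbb{R}, \end{cases} \] with $\varepsilon>0$. Then there exists a constant $C>0$ independent of $\varepsilon$ (one may take $C=|\pm f'(x_0)+g(x_0)|^{1-p}/(p-1)$) such that for every $\varepsilon>0$, no classical solution on $\mathbb{R}\times[0,T]$ exists if $T>C\varepsilon^{-(p-1)}$. Consequently the lifespan satisfies $T(\varepsilon)\le C\varepsilon^{-(p-1)}$.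
   Context: The lifespan $T(\varepsilon)$ is the supremum of all $T>0$ such that a classical solution of the problem exists on $\mathbb{R}\times[0,T]$ for the fixed data $(f,g)$. *)

(* Defs.v *)
From Stdlib Require Import Reals.
From Coquelicot Require Import Coquelicot.
Open Scope R_scope.

Definition compact_support (f : R -> R) : Prop :=
  exists M : R, forall x : R, M < Rabs x -> f x = 0.

Definition C2_0 (f : R -> R) : Prop :=
  (forall x, ex_derive f x) /\
  (forall x, ex_derive (Derive f) x) /\
  (forall x, continuous (Derive (Derive f)) x) /\
  compact_support f.

Definition C1_0 (g : R -> R) : Prop :=
  (forall x, ex_derive g x) /\
  (forall x, continuous (Derive g) x) /\
  compact_support g.

Definition px (u : R -> R -> R) : R -> R -> R := fun x t => Derive (fun y => u y t) x.
Definition pt (u : R -> R -> R) : R -> R -> R := fun x t => Derive (fun s => u x s) t.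

Definition open_strip (T x t : R) : Prop := 0 < t < T.
Definition closed_strip (T : R) (p : R * R) : Prop := 0 <= snd p <= T.

Definition cont_on_closed_strip (T : R) (F : R -> R -> R) : Prop :=
  forall x t, 0 <= t <= T ->
    filterlim (fun p : R * R => F (fst p) (snd p))
      (within (closed_strip T) (locally (x, t))) (locally (F x t)).

Definition ext_cont (T : R) (D E : R -> R -> R) : Prop :=
  (forall x t, 0 < t < T -> E x t = D x t) /\ cont_on_closed_strip T E.

(** u in C^2(R x [0,T]) in the standard sense of C^2 of the closure of an
    open set: u is C^2 in R x (0,T), u is continuous on R x [0,T], and all
    partial derivatives of order 1 and 2 extend continuously to R x [0,T]. *)
Definition C2_closed_strip (T : R) (u : R -> R -> R) : Prop :=
  (forall x t, 0 < t < T ->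
     ex_derive (fun y => u y t) x /\ ex_derive (fun s => u x s) t /\
     ex_derive (fun y => px u y t) x /\ ex_derive (fun s => px u x s) t /\
     ex_derive (fun y => pt u y t) x /\ ex_derive (fun s => pt u x s) t) /\
  cont_on_closed_strip T u /\
  (exists E, ext_cont T (px u) E) /\
  (exists E, ext_cont T (pt u) E) /\
  (exists E, ext_cont T (px (px u)) E) /\
  (exists E, ext_cont T (pt (px u)) E) /\
  (exists E, ext_cont T (px (pt u)) E) /\
  (exists E, ext_cont T (pt (pt u)) E).

(** Classical solution on R x [0,T] of
      u_tt - u_xx = |u_t + s u_x|^(p-1) (u_t + s u_x)   in R x (0,T),
      u(x,0) = eps f(x),  u_t(x,0) = eps g(x),
    where s = +1 or -1 encodes the sign choice. u_t(x,0) is the value at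
    t = 0 of the continuous extension of u_t. Note |w|^(p-1) w is written
    with Rpower; at w = 0 the product is 0 regardless of Rpower 0 _. *)
Definition classical_solution (p s eps : R) (f g : R -> R) (T : R)
    (u : R -> R -> R) : Prop :=
  0 < T /\
  C2_closed_strip T u /\
  (forall x t, 0 < t < T ->
     let w := pt u x t + s * px u x t in
     pt (pt u) x t - px (px u) x t = Rpower (Rabs w) (p - 1) * w) /\
  (forall x, u x 0 = eps * f x) /\
  (exists E, ext_cont T (pt u) E /\ forall x, E x 0 = eps * g x).

(* Main.v *)
Require Import Defs.
From Stdlib Require Import Reals Lra Classical.
From Coquelicot Require Import Coquelicot.
Open Scope R_scope.


Lemma cont_strip_eps T F x t : cont_on_closed_strip T F -> 0 <= t <= T ->
  forall eps : posreal, exists delta : posreal, forall y v, 0 <= v <= T ->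
   Rabs (y - x) < delta -> Rabs (v - t) < delta -> Rabs (F y v - F x t) < eps.
Proof.
intros H Ht eps.
specialize (H x t Ht _ (locally_ball (F x t) eps)).
destruct H as [d Hd].
exists d. intros y v Hv Hy Hvt.
apply (Hd (y, v)).
- split; [exact Hy | exact Hvt].
- exact Hv.
Qed.

Lemma interior_2d T x t : 0 < t < T ->
  exists d : posreal, forall y v, Rabs (y - x) < d -> Rabs (v - t) < d -> 0 < v < T.
Proof.
intros Ht.
assert (Hd : 0 < Rmin t (T - t)) by (apply Rmin_glb_lt; lra).
exists (mkposreal _ Hd). simpl. intros y v _ Hv.
pose proof (Rmin_l t (T-t)); pose proof (Rmin_r t (T-t)).
apply Rabs_lt_between' in Hv. lra.
Qed.

Lemma ext_cont_2d T D E x t : ext_cont T D E -> 0 < t < T -> continuity_2d_pt D x t.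
Proof.
intros [HE Hc] Ht eps.
destruct (cont_strip_eps T E x t Hc ltac:(lra) eps) as [d1 H1].
destruct (interior_2d T x t Ht) as [d2 H2].
assert (Hd : 0 < Rmin d1 d2) by (apply Rmin_glb_lt; apply cond_pos).
exists (mkposreal _ Hd). simpl. intros y v Hy Hv.
pose proof (Rmin_l d1 d2); pose proof (Rmin_r d1 d2).
assert (Hyv : 0 < v < T) by (apply (H2 y); lra).
rewrite <- (HE y v Hyv), <- (HE x t Ht).
apply H1; lra.
Qed.

Lemma interior_locally2d T (P : R -> R -> Prop) x t : 0 < t < T ->
  (forall y v, 0 < v < T -> P y v) -> locally_2d P x t.
Proof.
intros Ht HP. destruct (interior_2d T x t Ht) as [d Hd].
exists d. intros y v Hy Hv. apply HP. exact (Hd y v Hy Hv).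
Qed.

Lemma diff_partials (F Dx : R -> R -> R) x y dy :
  locally_2d (fun u v => is_derive (fun z => F z v) u (Dx u v)) x y ->
  continuity_2d_pt Dx x y ->
  is_derive (fun z => F x z) y dy ->
  differentiable_pt_lim F x y (Dx x y) dy.
Proof.
intros [d1 H1] Hc Hd eps.
assert (He2 : 0 < eps / 2) by (pose proof (cond_pos eps); lra).
destruct (Hc (mkposreal _ He2)) as [d2 H2]. simpl in H2.
apply is_derive_Reals in Hd.
destruct (Hd _ He2) as [d3 H3].
assert (Hd12 : 0 < Rmin d1 (Rmin d2 d3)).
{ apply Rmin_glb_lt; [apply cond_pos|apply Rmin_glb_lt; apply cond_pos]. }
exists (mkposreal _ Hd12). simpl. intros u v Hu Hv.
pose proof (Rmin_l d1 (Rmin d2 d3)); pose proof (Rmin_r d1 (Rmin d2 d3)).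
pose proof (Rmin_l d2 d3); pose proof (Rmin_r d2 d3).
assert (A : Rabs (F u v - F x v - Dx x y * (u - x)) <= eps / 2 * Rabs (u - x)).
{ destruct (MVT_gen (fun z => F z v) x u (fun z => Dx z v)) as [c [Hc1 Hc2]].
  - intros z Hz. apply H1.
    + unfold Rmin, Rmax in Hz; destruct (Rle_dec x u); apply Rabs_lt_between'; 
      apply Rabs_lt_between' in Hu; lra.
    + apply Rabs_lt_between'; apply Rabs_lt_between' in Hv; lra.
  - intros z Hz. apply continuity_pt_filterlim.
    apply (ex_derive_continuous (fun z0 => F z0 v)).
    eexists. apply H1.
    + unfold Rmin, Rmax in Hz; destruct (Rle_dec x u); apply Rabs_lt_between'; 
      apply Rabs_lt_between' in Hu; lra.
    + apply Rabs_lt_between'; apply Rabs_lt_between' in Hv; lra.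
  - simpl in Hc2. rewrite Hc2.
    replace (Dx c v * (u - x) - Dx x y * (u - x)) with ((Dx c v - Dx x y) * (u - x)) by ring.
    rewrite Rabs_mult. apply Rmult_le_compat_r; [apply Rabs_pos|].
    left. apply H2.
    + unfold Rmin, Rmax in Hc1; destruct (Rle_dec x u); apply Rabs_lt_between'; 
      apply Rabs_lt_between' in Hu; lra.
    + lra. }
assert (B : Rabs (F x v - F x y - dy * (v - y)) <= eps / 2 * Rabs (v - y)).
{ destruct (Req_dec v y) as [Heq|Hne].
  - subst. replace (F x y - F x y - dy * (y - y)) with 0 by ring.
    rewrite Rabs_R0, Rminus_diag, Rabs_R0. lra.
  - assert (Hh : v - y <> 0) by lra.
    specialize (H3 (v - y) Hh ltac:(lra)).
    replace (y + (v - y)) with v in H3 by ring.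
    replace (F x v - F x y - dy * (v - y)) with (((F x v - F x y) / (v - y) - dy) * (v - y))
      by (field; exact Hh).
    rewrite Rabs_mult. apply Rmult_le_compat_r; [apply Rabs_pos|lra]. }
replace (F u v - F x y - (Dx x y * (u - x) + dy * (v - y))) with
  ((F u v - F x v - Dx x y * (u - x)) + (F x v - F x y - dy * (v - y))) by ring.
eapply Rle_trans; [apply Rabs_triang|].
pose proof (Rmax_l (Rabs (u - x)) (Rabs (v - y))).
pose proof (Rmax_r (Rabs (u - x)) (Rabs (v - y))).
pose proof (cond_pos eps). nra.
Qed.

Lemma Rpower_pos x y : 0 < Rpower x y.
Proof. unfold Rpower. apply exp_pos. Qed.

Lemma ballR (x y : R) (d : posreal) : Rabs (y - x) < d -> ball x d y.
Proof. intros H. exact H. Qed.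

Lemma ode_mono (p T : R) (phi : R -> R) :
  (forall t, 0 <= t < T -> continuity_pt phi t) ->
  (forall t, 0 < t < T -> is_derive phi t (Rpower (Rabs (phi t)) (p - 1) * phi t)) ->
  0 < phi 0 -> forall t, 0 <= t < T -> phi 0 <= phi t.
Proof.
intros Hc Hd H0 t1 Ht1.
destruct (Rle_or_lt (phi 0) (phi t1)) as [Hle|Hlt]; [exact Hle|exfalso].
set (A := fun t => 0 <= t <= t1 /\ forall tau, 0 <= tau <= t -> 0 < phi tau).
assert (HA0 : A 0). { split; [lra|]. intros tau Htau. replace tau with 0 by lra. exact H0. }
assert (Hb : bound A). { exists t1. intros x [Hx _]. lra. }
destruct (completeness A Hb (ex_intro _ 0 HA0)) as [S [HS1 HS2]].
assert (HS0 : 0 <= S) by (apply HS1; exact HA0).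
assert (HSt1 : S <= t1) by (apply HS2; intros x [Hx _]; lra).
assert (Hi : forall tau, 0 <= tau < S -> 0 < phi tau).
{ intros tau Htau.
  destruct (classic (exists t, A t /\ tau < t)) as [[t [[_ Ht] Htt]]|Hn].
  - apply Ht. lra.
  - exfalso. assert (S <= tau).
    { apply HS2. intros x Hx. destruct (Rle_or_lt x tau) as [|Hl]; [assumption|].
      exfalso. apply Hn. exists x. split; assumption. }
    lra. }
assert (Hii : forall tau, 0 <= tau < S -> phi 0 <= phi tau).
{ intros tau Htau.
  destruct (MVT_gen phi 0 tau (fun t => Rpower (Rabs (phi t)) (p - 1) * phi t)) as [c [Hc1 Hc2]].
  - intros x Hx. rewrite Rmin_left in Hx by lra. rewrite Rmax_right in Hx by lra.
    apply Hd. lra.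
  - intros x Hx. rewrite Rmin_left in Hx by lra. rewrite Rmax_right in Hx by lra.
    apply Hc. lra.
  - rewrite Rmin_left in Hc1 by lra. rewrite Rmax_right in Hc1 by lra.
    assert (0 < phi c) by (apply Hi; lra).
    pose proof (Rpower_pos (Rabs (phi c)) (p - 1)).
    assert (0 <= Rpower (Rabs (phi c)) (p - 1) * phi c * (tau - 0)).
    { apply Rmult_le_pos; [|lra]. left. apply Rmult_lt_0_compat; lra. }
    lra. }
assert (Hiii : phi 0 <= phi S).
{ destruct (Rle_or_lt (phi 0) (phi S)) as [|HSl]; [assumption|exfalso].
  destruct (Req_dec S 0) as [HS|HS]; [rewrite HS in HSl; lra|].
  assert (He : 0 < phi 0 - phi S) by lra.
  pose proof (Hc S ltac:(lra)) as HcS.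
  pose proof (proj1 (continuity_pt_locally phi S) HcS) as HcS'. clear HcS. rename HcS' into HcS.
  destruct (HcS (mkposreal _ He)) as [d Hd']. simpl in Hd'.
  set (tau := Rmax 0 (S - d / 2)).
  assert (Htau : 0 <= tau < S).
  { unfold tau, Rmax. pose proof (cond_pos d). destruct (Rle_dec 0 (S - d/2)); lra. }
  assert (Hb2 : Rabs (tau - S) < d).
  { unfold tau, Rmax. pose proof (cond_pos d). apply Rabs_lt_between'.
    destruct (Rle_dec 0 (S - d/2)); lra. }
  specialize (Hd' tau (ballR _ _ _ Hb2)). specialize (Hii tau Htau).
  apply Rabs_lt_between' in Hd'. lra. }
assert (HSlt : S < t1) by (destruct (Req_dec S t1); [subst; lra|lra]).
assert (HpS : 0 < phi S) by lra.
pose proof (Hc S ltac:(lra)) as HcS.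
pose proof (proj1 (continuity_pt_locally phi S) HcS) as HcS'. clear HcS. rename HcS' into HcS.
destruct (HcS (mkposreal _ HpS)) as [d Hd']. simpl in Hd'.
set (t' := Rmin t1 (S + d / 2)).
assert (Ht' : A t').
{ split.
  - unfold t', Rmin. pose proof (cond_pos d). destruct (Rle_dec t1 (S + d/2)); lra.
  - intros tau Htau. destruct (Rlt_or_le tau S) as [Hl|Hl].
    + apply Hi; lra.
    + assert (Rabs (tau - S) < d).
      { apply Rabs_lt_between'. unfold t', Rmin in Htau. pose proof (cond_pos d).
        destruct (Rle_dec t1 (S + d/2)); lra. }
      specialize (Hd' tau (ballR _ _ _ H)). apply Rabs_lt_between' in Hd'. lra. }
specialize (HS1 t' Ht').
unfold t', Rmin in HS1. pose proof (cond_pos d). destruct (Rle_dec t1 (S + d/2)); lra.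
Qed.

Lemma ode_blow_pos (p T : R) (phi : R -> R) : 1 < p ->
  (forall t, 0 <= t < T -> continuity_pt phi t) ->
  (forall t, 0 < t < T -> is_derive phi t (Rpower (Rabs (phi t)) (p - 1) * phi t)) ->
  0 < phi 0 -> T <= Rpower (phi 0) (1 - p) / (p - 1).
Proof.
intros Hp Hc Hd H0.
pose proof (ode_mono p T phi Hc Hd H0) as Hm.
assert (Hpos : forall t, 0 <= t < T -> 0 < phi t) by (intros t Ht; specialize (Hm t Ht); lra).
set (B := Rpower (phi 0) (1 - p) / (p - 1)).
assert (HB : 0 < B) by (unfold B; apply Rdiv_lt_0_compat; [apply Rpower_pos|lra]).
destruct (Rle_or_lt T B) as [|HTB]; [assumption|exfalso].
set (t := (B + T) / 2).
assert (Ht : 0 <= t < T) by (unfold t; lra).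
set (G := fun tau => Rpower (phi tau) (1 - p) + (p - 1) * tau).
destruct (MVT_gen G 0 t (fun _ => 0)) as [c [Hc1 Hc2]].
- intros x Hx. rewrite Rmin_left in Hx by lra. rewrite Rmax_right in Hx by lra.
  assert (Hx' : 0 < x < T) by lra.
  assert (Hpx : 0 < phi x) by (apply Hpos; lra).
  unfold G.
  evar (l : R).
  assert (HD : is_derive (fun tau => Rpower (phi tau) (1 - p) + (p - 1) * tau) x l).
  { apply (is_derive_plus (fun tau => Rpower (phi tau) (1 - p)) (fun tau => (p - 1) * tau)).
    - apply (is_derive_comp (fun y => Rpower y (1 - p)) phi).
      + apply is_derive_Reals. apply derivable_pt_lim_power. exact Hpx.
      + apply Hd. exact Hx'.
    - apply is_derive_scal. apply is_derive_id. }
  subst l. match type of HD with is_derive _ _ ?l => replace 0 with l; [exact HD|] end.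
  unfold plus, scal, one; simpl. unfold mult; simpl.
  rewrite Rabs_pos_eq by lra.
  replace (1 - p - 1) with (- (p - 1) + (- (1))) by ring.
  rewrite Rpower_plus, !Rpower_Ropp, Rpower_1 by lra.
  pose proof (Rpower_pos (phi x) (p - 1)).
  field. split; lra.
- intros x Hx. rewrite Rmin_left in Hx by lra. rewrite Rmax_right in Hx by lra.
  assert (Hpx : 0 < phi x) by (apply Hpos; lra).
  unfold G. apply continuity_pt_plus.
  + apply (continuity_pt_comp phi (fun y => Rpower y (1 - p))).
    * apply Hc. lra.
    * apply derivable_continuous_pt. exists ((1 - p) * Rpower (phi x) (1 - p - 1)).
      apply derivable_pt_lim_power. exact Hpx.
  + apply continuity_pt_mult; [apply continuity_pt_const; intros ? ?; reflexivity|apply continuity_pt_id].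
- unfold G in Hc2. rewrite Rmult_0_l, Rmult_0_r, Rplus_0_r in Hc2.
  pose proof (Rpower_pos (phi t) (1 - p)).
  assert (t < B).
  { unfold B. apply Rmult_lt_reg_r with (p - 1); [lra|].
    unfold Rdiv. rewrite Rmult_assoc, Rinv_l by lra. lra. }
  unfold t in H1. lra.
Qed.

Lemma ode_blow (p T : R) (phi : R -> R) : 1 < p ->
  (forall t, 0 <= t < T -> continuity_pt phi t) ->
  (forall t, 0 < t < T -> is_derive phi t (Rpower (Rabs (phi t)) (p - 1) * phi t)) ->
  phi 0 <> 0 -> T <= Rpower (Rabs (phi 0)) (1 - p) / (p - 1).
Proof.
intros Hp Hc Hd H0.
destruct (Rlt_or_le 0 (phi 0)) as [Hl|Hl].
- rewrite Rabs_pos_eq by lra. apply ode_blow_pos; assumption.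
- rewrite Rabs_left by lra.
  apply (ode_blow_pos p T (fun t => - phi t) Hp).
  + intros t Ht. apply continuity_pt_opp. apply Hc. exact Ht.
  + intros t Ht. rewrite Rabs_Ropp.
    replace (Rpower (Rabs (phi t)) (p - 1) * - phi t) with (- (Rpower (Rabs (phi t)) (p - 1) * phi t)) by ring.
    apply (is_derive_opp phi). apply Hd. exact Ht.
  + lra.
Qed.

Lemma boundary_deriv T u Ex x0 : 0 < T -> cont_on_closed_strip T u ->
  (forall x t, 0 < t < T -> ex_derive (fun y => u y t) x) ->
  ext_cont T (px u) Ex -> is_derive (fun y => u y 0) x0 (Ex x0 0).
Proof.
intros HT Hu Hder [HE HEc].
apply is_derive_Reals. intros eps Heps.
assert (He2 : 0 < eps / 2) by lra.
destruct (cont_strip_eps T Ex x0 0 HEc ltac:(lra) (mkposreal _ He2)) as [d Hd]. simpl in Hd.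
exists d. intros h Hh0 Hhd.
set (L := Ex x0 0).
assert (Hh : 0 < Rabs h) by (apply Rabs_pos_lt; exact Hh0).
assert (Key : Rabs (u (x0 + h) 0 - u x0 0 - L * h) <= eps / 2 * Rabs h).
{ apply Rnot_lt_le. intros Hgt.
  set (eta := Rabs (u (x0 + h) 0 - u x0 0 - L * h) - eps / 2 * Rabs h).
  assert (Heta : 0 < eta / 2) by (unfold eta; lra).
  destruct (cont_strip_eps T u (x0 + h) 0 Hu ltac:(lra) (mkposreal _ Heta)) as [d1 H1].
  destruct (cont_strip_eps T u x0 0 Hu ltac:(lra) (mkposreal _ Heta)) as [d2 H2].
  simpl in H1, H2.
  set (t := Rmin (Rmin d d1) (Rmin d2 T) / 2).
  pose proof (cond_pos d); pose proof (cond_pos d1); pose proof (cond_pos d2).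
  pose proof (Rmin_l (Rmin d d1) (Rmin d2 T)); pose proof (Rmin_r (Rmin d d1) (Rmin d2 T)).
  pose proof (Rmin_l d d1); pose proof (Rmin_r d d1);
  pose proof (Rmin_l d2 T); pose proof (Rmin_r d2 T).
  assert (Hm : 0 < Rmin (Rmin d d1) (Rmin d2 T)) by
    (repeat apply Rmin_glb_lt; assumption).
  assert (Ht : 0 < t < T) by (unfold t; lra).
  assert (Htd : Rabs (t - 0) < d) by (rewrite Rminus_0_r, Rabs_pos_eq by lra; unfold t; lra).
  assert (Htd1 : Rabs (t - 0) < d1) by (rewrite Rminus_0_r, Rabs_pos_eq by lra; unfold t; lra).
  assert (Htd2 : Rabs (t - 0) < d2) by (rewrite Rminus_0_r, Rabs_pos_eq by lra; unfold t; lra).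
  assert (A1 := H1 (x0 + h) t ltac:(lra) ltac:(rewrite Rminus_diag, Rabs_R0; apply cond_pos) Htd1).
  assert (A2 := H2 x0 t ltac:(lra) ltac:(rewrite Rminus_diag, Rabs_R0; apply cond_pos) Htd2).
  destruct (MVT_gen (fun y => u y t) x0 (x0 + h) (fun y => px u y t)) as [c [Hc1 Hc2]].
  - intros z _. apply Derive_correct. apply Hder. exact Ht.
  - intros z _. apply continuity_pt_filterlim. apply (ex_derive_continuous (fun y => u y t)). apply Hder. exact Ht.
  - simpl in Hc2.
    assert (Hcx : Rabs (c - x0) < d).
    { apply Rabs_lt_between'. apply Rabs_def2 in Hhd.
      unfold Rmin, Rmax in Hc1. destruct (Rle_dec x0 (x0 + h)); lra. }
    pose proof (Hd c t ltac:(lra) Hcx Htd) as A3.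
    rewrite <- (HE c t Ht) in Hc2. fold L in A3.
    assert (A4 : Rabs (u (x0 + h) t - u x0 t - L * h) <= eps / 2 * Rabs h).
    { rewrite Hc2. replace (Ex c t * (x0 + h - x0) - L * h) with ((Ex c t - L) * h) by ring.
      rewrite Rabs_mult. apply Rmult_le_compat_r; [apply Rabs_pos|lra]. }
    { assert (Rabs (u (x0 + h) 0 - u x0 0 - L * h) <= Rabs (u (x0 + h) t - u (x0 + h) 0) + Rabs (u (x0 + h) t - u x0 t - L * h) +
      Rabs (u x0 t - u x0 0)).
      { replace (u (x0 + h) 0 - u x0 0 - L * h) with
          (-(u (x0 + h) t - u (x0 + h) 0) + (u (x0 + h) t - u x0 t - L * h) + (u x0 t - u x0 0)) by ring.
        eapply Rle_trans; [apply Rabs_triang|]. apply Rplus_le_compat_r.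
        eapply Rle_trans; [apply Rabs_triang|]. rewrite Rabs_Ropp. lra. }
      unfold eta in *. lra. } }
replace ((u (x0 + h) 0 - u x0 0) / h - L) with ((u (x0 + h) 0 - u x0 0 - L * h) / h)
  by (field; exact Hh0).
unfold Rdiv. rewrite Rabs_mult, Rabs_inv.
apply Rle_lt_trans with (eps / 2 * Rabs h * / Rabs h).
- apply Rmult_le_compat_r; [left; apply Rinv_0_lt_compat; exact Hh|exact Key].
- rewrite Rmult_assoc, Rinv_r by lra. lra.
Qed.

Lemma ballR_inv (x y : R) (d : posreal) : ball x d y -> Rabs (y - x) < d.
Proof. intros H. exact H. Qed.

Lemma Rmax0_lip a b : Rabs (Rmax 0 a - Rmax 0 b) <= Rabs (a - b).
Proof. unfold Rmax. destruct (Rle_dec 0 a), (Rle_dec 0 b);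
  unfold Rabs; repeat destruct Rcase_abs; lra. Qed.

Lemma path_cont T E x0 s t : cont_on_closed_strip T E -> (s = 1 \/ s = -1) -> 0 <= t < T ->
  continuity_pt (fun tau => E (x0 - s * Rmax 0 tau) (Rmax 0 tau)) t.
Proof.
intros HE Hs Ht. apply continuity_pt_locally. intros eps.
assert (Hm : Rmax 0 t = t) by (apply Rmax_right; lra).
rewrite Hm.
destruct (cont_strip_eps T E (x0 - s * t) t HE ltac:(lra) eps) as [d Hd].
assert (Hd' : 0 < Rmin d (T - t)) by (apply Rmin_glb_lt; [apply cond_pos|lra]).
exists (mkposreal _ Hd'). intros y Hy. apply ballR_inv in Hy. simpl in Hy.
pose proof (Rmin_l d (T - t)); pose proof (Rmin_r d (T - t)).
pose proof (Rmax0_lip y t) as Hl. rewrite Hm in Hl.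
apply Hd.
- split; [apply Rmax_l|]. unfold Rmax. destruct (Rle_dec 0 y); apply Rabs_def2 in Hy; lra.
- replace (x0 - s * Rmax 0 y - (x0 - s * t)) with (- s * (Rmax 0 y - t)) by ring.
  assert (Hs1 : Rabs (- s) = 1) by (rewrite Rabs_Ropp; destruct Hs; subst; [rewrite Rabs_pos_eq | rewrite Rabs_left]; lra).
  rewrite Rabs_mult, Hs1.
  lra.
- lra.
Qed.

Lemma lin_deriv x0 s t : derivable_pt_lim (fun tau => x0 - s * tau) t (- s).
Proof. apply is_derive_Reals. auto_derive; [exact I|ring]. Qed.

Theorem theorem4p1 (p s : R) (f g : R -> R) (x0 : R) :
  1 < p ->
  (s = 1 \/ s = -1) ->
  C2_0 f -> C1_0 g ->
  s * Derive f x0 + g x0 <> 0 ->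
  let C := Rpower (Rabs (s * Derive f x0 + g x0)) (1 - p) / (p - 1) in
  0 < C /\
  forall eps : R, 0 < eps ->
  forall T : R, T > C * Rpower eps (- (p - 1)) ->
  ~ (exists u : R -> R -> R, classical_solution p s eps f g T u).
Proof.
intros Hp Hs Hf Hg Ha C.
assert (HC : 0 < C) by (unfold C; apply Rdiv_lt_0_compat; [apply Rpower_pos|lra]).
split; [exact HC|].
intros eps Heps T HT [u Hsol].
destruct Hsol as [HT0 [HC2 [HPDE [Hu0 [Et [[HEt HEtc] HEt0]]]]]].
destruct HC2 as [Hint [Hcu [[Ex HEx] [_ [[Exx HExx] [[Etx HEtx] [[Ext HExt] [Ett HEtt]]]]]]]].
assert (HA : Ex x0 0 = eps * Derive f x0).
{ pose proof (boundary_deriv T u Ex x0 HT0 Hcu (fun x t Ht => proj1 (Hint x t Ht)) HEx) as Hb.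
  assert (Hb' : is_derive (fun y => eps * f y) x0 (Ex x0 0)).
  { eapply is_derive_ext; [|exact Hb]. intros y. simpl. apply Hu0. }
  apply is_derive_unique in Hb'. rewrite Derive_scal in Hb'. lra. }
set (phi := fun tau => Et (x0 - s * Rmax 0 tau) (Rmax 0 tau) + s * Ex (x0 - s * Rmax 0 tau) (Rmax 0 tau)).
assert (Hphi0 : phi 0 = eps * (s * Derive f x0 + g x0)).
{ unfold phi. rewrite Rmax_left by lra. rewrite Rmult_0_r, Rminus_0_r, HEt0, HA. ring. }
assert (Hcont : forall t, 0 <= t < T -> continuity_pt phi t).
{ intros t Ht. unfold phi. apply continuity_pt_plus.
  - apply (path_cont T); [exact HEtc|exact Hs|exact Ht].
  - apply continuity_pt_mult; [apply continuity_pt_const; intros ? ?; reflexivity|].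
    apply (path_cont T); [exact (proj2 HEx)|exact Hs|exact Ht]. }
assert (Hss : s * s = 1) by (destruct Hs; subst; ring).
assert (Hder : forall t, 0 < t < T -> is_derive phi t (Rpower (Rabs (phi t)) (p - 1) * phi t)).
{ intros t Ht. set (y := x0 - s * t).
  assert (Hloc : locally t (fun tau => pt u (x0 - s * tau) tau + s * px u (x0 - s * tau) tau = phi tau)).
  { assert (Hd : 0 < Rmin t (T - t)) by (apply Rmin_glb_lt; lra).
    exists (mkposreal _ Hd). intros tau Htau. apply ballR_inv in Htau. simpl in Htau.
    pose proof (Rmin_l t (T - t)); pose proof (Rmin_r t (T - t)).
    apply Rabs_def2 in Htau.
    assert (Htau' : 0 < tau < T) by lra.
    unfold phi. rewrite Rmax_right by lra. rewrite (HEt _ _ Htau'), (proj1 HEx _ _ Htau'). reflexivity. }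
  assert (Hphit : phi t = pt u y t + s * px u y t).
  { unfold phi, y. rewrite Rmax_right by lra. rewrite (HEt _ _ Ht), (proj1 HEx _ _ Ht). reflexivity. }
  assert (D1 : differentiable_pt_lim (pt u) y t (px (pt u) y t) (pt (pt u) y t)).
  { apply diff_partials.
    - apply (interior_locally2d T); [exact Ht|]. intros a b Hb.
      apply Derive_correct. apply (Hint a b Hb).
    - apply (ext_cont_2d T _ Ext); [exact HExt|exact Ht].
    - apply Derive_correct. apply (Hint y t Ht). }
  assert (D2 : differentiable_pt_lim (px u) y t (px (px u) y t) (pt (px u) y t)).
  { apply diff_partials.
    - apply (interior_locally2d T); [exact Ht|]. intros a b Hb.
      apply Derive_correct. apply (Hint a b Hb).
    - apply (ext_cont_2d T _ Exx); [exact HExx|exact Ht].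
    - apply Derive_correct. apply (Hint y t Ht). }
  assert (Sch : px (pt u) y t = pt (px u) y t).
  { unfold px, pt. apply Schwarz.
    - apply (interior_locally2d T); [exact Ht|]. intros a b Hb.
      destruct (Hint a b Hb) as [H1 [H2 [H3 [H4 [H5 H6]]]]]. repeat split; assumption.
    - exact (ext_cont_2d T _ Ext y t HExt Ht).
    - exact (ext_cont_2d T _ Etx y t HEtx Ht). }
  pose proof (derivable_pt_lim_comp_2d (pt u) (fun tau => x0 - s * tau) (fun tau => tau) t _ _ _ _ D1 (lin_deriv x0 s t) (derivable_pt_lim_id t)) as G1.
  pose proof (derivable_pt_lim_comp_2d (px u) (fun tau => x0 - s * tau) (fun tau => tau) t _ _ _ _ D2 (lin_deriv x0 s t) (derivable_pt_lim_id t)) as G2.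
  apply is_derive_Reals in G1. apply is_derive_Reals in G2.
  pose proof (is_derive_plus _ _ _ _ _ G1 (is_derive_scal _ _ s _ G2)) as G.
  eapply is_derive_ext_loc; [exact Hloc|].
  match type of G with is_derive _ _ ?l => replace (Rpower (Rabs (phi t)) (p - 1) * phi t) with l; [exact G|] end.
  unfold plus, scal; simpl. unfold mult; simpl.
  rewrite Hphit. fold y. rewrite <- (HPDE y t Ht). rewrite Sch.
  replace (s * (px (px u) y t * - s + pt (px u) y t * 1)) with
    (- (s * s) * px (px u) y t + s * pt (px u) y t) by ring.
  rewrite Hss. ring. }
assert (Hne : phi 0 <> 0).
{ rewrite Hphi0. apply Rmult_integral_contrapositive_currified; lra. }
pose proof (ode_blow p T phi Hp Hcont Hder Hne) as HB.
rewrite Hphi0, Rabs_mult, (Rabs_pos_eq eps) in HB by lra.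
rewrite <- Rpower_mult_distr in HB by (try lra; apply Rabs_pos_lt; exact Ha).
replace (- (p - 1)) with (1 - p) in HT by ring.
unfold C in HT.
assert (Rpower eps (1 - p) * Rpower (Rabs (s * Derive f x0 + g x0)) (1 - p) / (p - 1) =
        Rpower (Rabs (s * Derive f x0 + g x0)) (1 - p) / (p - 1) * Rpower eps (1 - p)) by (field; lra).
lra.
Qed.
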